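(* For every $\alpha\in[0,2]$, \[ \max_{\mathbf z\in\mathcal Z} F_\alpha(\mathbf z)\;=\;\max_{\mathbf x\in\mathcal X}F_\alpha(\mathbf x), \] i.e. the integrality gap $f^{\mathrm{SO}}(\mathbf z^* )/f^{\mathrm{RSO}}(\mathbf x^* )$ between the SSA problem with optimal allocation and its relaxation equals $1$, where $F_\alpha$ is defined below.
   Context: $\mathcal U$ (users) and $\mathcal B$ (stations) are finite nonempty sets, with positive rates $r_{ub}$. $\mathcal Z=\{\mathbf z\in\mathbb Z_+^{|\mathcal U|\times|\mathcal B|}:\sum_b z_{ub}=1\ \forall u\}$ and its relaxation $\mathcal X=\{\mathbf x\in\mathbb R_+^{|\mathcal U|\times|\mathcal B|}:\sum_b x_{ub}=1\ \forall u\}$. For $\mathbf w\in\mathcal X$ (in particular $\mathbf w\in\mathcal Z$) define $F_0(\mathbf w)=\sum_{b}\max_{u} r_{ub}w_{ub}$; $F_1(\mathbf w)=\sum_{u,b} w_{ub}\big(\log r_{ub}-\log(1+\sum_{v\ne u} w_{vb})\big)$; and for $\alpha>0,\alpha\ne1$: $F_\alpha(\mathbf w)=\frac{1}{1-\alpha}\sum_{u,b} r_{ub}^{1-\alpha}w_{ub}\big(1+\sum_{v\ne u}(r_{vb}/r_{ub})^{(1-\alpha)/\alpha}w_{vb}\big)^{\alpha-1}$. $f^{\mathrm{SO}}=\max_{\mathbf z\in\mathcal Z}F_\alpha(\mathbf z)$ is the single-station association utility maximization problem with optimal station resource allocation (sum over users of $\alpha$-fair utility $U_\alpha(R)=R^{1-\alpha}/(1-\alpha)$,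 $U_1=\log$, of downlink rates), and $f^{\mathrm{RSO}}=\max_{\mathbf x\in\mathcal X}F_\alpha(\mathbf x)$ is its relaxation; $\mathbf z^*,\mathbf x^*$ denote their optimizers. *)

(* Defs.v *)
From HB Require Import structures.
From mathcomp Require Import all_boot all_order all_algebra.
From mathcomp Require Import all_classical all_reals all_analysis.
Set Implicit Arguments. Unset Strict Implicit. Unset Printing Implicit Defensive.
Import Order.TTheory GRing.Theory Num.Theory.
Local Open Scope ring_scope.
Local Open Scope classical_set_scope.

Section Defs.
Variables (R : realType) (U B : finType).

Definition assoc := U -> B -> R.

Definition relaxX : set assoc :=
  [set w | (forall u b, 0 <= w u b) /\ (forall u, \sum_(b : B) w u b = 1)].

Definition integZ : set assoc :=
  [set w | (forall u b, w u b \is a Num.nat) /\ (forall u, \sum_(b : B) w u b = 1)].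

Definition Falpha (r : U -> B -> R) (alpha : R) (w : assoc) : R :=
  if alpha == 0 then
    \sum_(b : B) \big[Num.max/0]_(u : U) (r u b * w u b)
  else if alpha == 1 then
    \sum_(u : U) \sum_(b : B)
       w u b * (ln (r u b) - ln (1 + \sum_(v : U | v != u) w v b))
  else
    (1 - alpha)^-1 * \sum_(u : U) \sum_(b : B)
       (powR (r u b) (1 - alpha) * w u b *
        powR (1 + \sum_(v : U | v != u)
                    powR (r v b / r u b) ((1 - alpha) / alpha) * w v b)
             (alpha - 1)).

Definition is_max (S : set R) (m : R) : Prop := S m /\ forall y, S y -> y <= m.

End Defs.

(* Main.v *)
From HB Require Import structures.
From mathcomp Require Import all_boot all_order all_algebra.
From mathcomp Require Import all_classical all_reals all_analysis.
From mathcomp Require Import ring lra.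
Require Import Defs.
Import Order.TTheory GRing.Theory Num.Theory.
Set Implicit Arguments. Unset Strict Implicit. Unset Printing Implicit Defensive.
Local Open Scope ring_scope.
Local Open Scope classical_set_scope.

Definition chord (R : realType) (f : R -> R) :=
  forall t, 0 <= t <= 1 -> f t <= (1 - t) * f 0 + t * f 1.
Definition aff (R : realType) (f : R -> R) :=
  forall t, f t = (1 - t) * f 0 + t * f 1.

Lemma chord_ext (R : realType) (f g : R -> R) : f =1 g -> chord f -> chord g.
Proof. by move=> e h t ht; rewrite -!e; apply: h. Qed.
Lemma aff_ext (R : realType) (f g : R -> R) : f =1 g -> aff f -> aff g.
Proof. by move=> e h t; rewrite -!e; apply: h. Qed.
Lemma aff_chord (R : realType) (f : R -> R) : aff f -> chord f.
Proof. by move=> h t _; rewrite -h. Qed.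
Lemma aff_const (R : realType) (c : R) : aff (fun _ => c).
Proof. move=> t /=; lra. Qed.
Lemma aff_id (R : realType) : aff (fun t : R => t).
Proof. move=> t /=; lra. Qed.
Lemma aff_add (R : realType) (f g : R -> R) : aff f -> aff g -> aff (fun t => f t + g t).
Proof. move=> hf hg t; rewrite hf hg /=; lra. Qed.
Lemma aff_scale (R : realType) (k : R) (f : R -> R) : aff f -> aff (fun t => k * f t).
Proof. move=> hf t; rewrite hf mulrDr !mulrA -!(mulrC k) -!mulrA. done. Qed.
Lemma aff_sum (R : realType) (I : Type) (s : seq I) (P : pred I) (F : I -> R -> R) :
  (forall i, aff (F i)) -> aff (fun t => \sum_(i <- s | P i) F i t).
Proof.
move=> h; elim: s => [|i s IH].
  by apply: (aff_ext _ (aff_const 0)) => t; rewrite big_nil.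
apply: (aff_ext (f := fun t => (if P i then F i t else 0) + \sum_(j <- s | P j) F j t)).
  by move=> t; rewrite big_cons; case: (P i); rewrite ?add0r.
apply: aff_add => //; case: (P i) => //; exact: aff_const.
Qed.

Lemma chord_const (R : realType) (c : R) : chord (fun _ => c).
Proof. exact/aff_chord/aff_const. Qed.
Lemma chord_add (R : realType) (f g : R -> R) : chord f -> chord g -> chord (fun t => f t + g t).
Proof. move=> hf hg t ht; have := hf t ht; have := hg t ht => /=; lra. Qed.
Lemma chord_scale (R : realType) (k : R) (f : R -> R) : 0 <= k -> chord f -> chord (fun t => k * f t).
Proof.
move=> k0 hf t ht /=; have := ler_wpM2l k0 (hf t ht).
by move=> h; apply: (le_trans h); rewrite mulrDr !mulrA -!(mulrC k) -!mulrA.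
Qed.
Lemma chord_max (R : realType) (f g : R -> R) : chord f -> chord g -> chord (fun t => Num.max (f t) (g t)).
Proof.
move=> hf hg t ht /=; have /andP[t0 t1] := ht.
have w0 : 0 <= 1 - t by rewrite subr_ge0.
rewrite ge_max; apply/andP; split.
- apply: (le_trans (hf t ht)); apply: lerD; apply: ler_wpM2l => //; by rewrite le_max lexx ?orbT.
- apply: (le_trans (hg t ht)); apply: lerD; apply: ler_wpM2l => //; by rewrite le_max lexx ?orbT.
Qed.
Lemma chord_sum (R : realType) (I : Type) (s : seq I) (P : pred I) (F : I -> R -> R) :
  (forall i, chord (F i)) -> chord (fun t => \sum_(i <- s | P i) F i t).
Proof.
move=> h; elim: s => [|i s IH].
  by apply: (chord_ext _ (chord_const 0)) => t; rewrite big_nil.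
apply: (chord_ext (f := fun t => (if P i then F i t else 0) + \sum_(j <- s | P j) F j t)).
  by move=> t; rewrite big_cons; case: (P i); rewrite ?add0r.
apply: chord_add => //; case: (P i) => //; exact: chord_const.
Qed.
Lemma chord_bigmax (R : realType) (I : Type) (s : seq I) (P : pred I) (F : I -> R -> R) :
  (forall i, chord (F i)) -> chord (fun t => \big[Num.max/0]_(i <- s | P i) F i t).
Proof.
move=> h; elim: s => [|i s IH].
  by apply: (chord_ext _ (chord_const 0)) => t; rewrite big_nil.
case Pi: (P i).
  apply: (chord_ext (f := fun t => Num.max (F i t) (\big[Num.max/0]_(j <- s | P j) F j t))).
    by move=> t; rewrite big_cons Pi.
  exact: chord_max.
by apply: (chord_ext _ IH) => t; rewrite big_cons Pi.
Qed.
Lemma eqle (R : realType) (x y : R) : x = y -> x <= y.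
Proof. by move->. Qed.

Lemma mid_gt0 (R : realType) (a b t : R) : 0 < a -> 0 < b -> 0 <= t <= 1 -> 0 < (1 - t) * a + t * b.
Proof. move=> a0 b0 /andP[t0 t1]; nra. Qed.

Lemma tan_concave (R : realType) (phi : R -> R) (a b t c : R) :
  0 < a -> 0 < b -> 0 <= t <= 1 ->
  (forall y, 0 < y -> phi y <= phi ((1 - t) * a + t * b) + c * (y / ((1 - t) * a + t * b) - 1)) ->
  (1 - t) * phi a + t * phi b <= phi ((1 - t) * a + t * b).
Proof.
move=> a0 b0 ht H; have m0 := mid_gt0 a0 b0 ht.
set m := (1 - t) * a + t * b in H m0 *.
have /andP[t0 t1] := ht.
have e1 := ler_wpM2l (_ : 0 <= 1 - t) (H a a0); have e2 := ler_wpM2l t0 (H b b0).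
have key : (1 - t) * (a / m) + t * (b / m) = 1.
  by rewrite !mulrA -mulrDl divff // gt_eqF.
have E : (1 - t) * (phi m + c * (a / m - 1)) + t * (phi m + c * (b / m - 1)) =
   phi m + c * ((1 - t) * (a / m) + t * (b / m) - 1) by ring.
rewrite key subrr mulr0 addr0 in E.
rewrite -E; apply: lerD; [apply: e1; rewrite subr_ge0 | apply: e2]; done.
Qed.

Lemma ln_tan (R : realType) (y m : R) : 0 < y -> 0 < m -> ln y <= ln m + 1 * (y / m - 1).
Proof.
move=> y0 m0; have ym : 0 < y / m by rewrite divr_gt0.
rewrite -{1}(divfK (lt0r_neq0 m0) y) mulrC.
rewrite lnM ?posrE // mul1r lerD2l.
have := @le_ln1Dx R (y / m - 1); rewrite [1 + _]addrC subrK; apply; lra.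
Qed.

Lemma ln_chord2 (R : realType) (a b t : R) : 0 < a -> 0 < b -> 0 <= t <= 1 ->
  (1 - t) * ln a + t * ln b <= ln ((1 - t) * a + t * b).
Proof.
move=> a0 b0 ht; apply: (tan_concave (c := 1)) => // y y0.
exact: ln_tan (mid_gt0 a0 b0 ht).
Qed.

Lemma pow_le (R : realType) (z p : R) : 0 < z -> 0 <= p <= 1 -> powR z p <= 1 + p * (z - 1).
Proof.
move=> z0 /andP[p0 p1]; rewrite /powR gt_eqF //.
have h := @ln_chord2 R 1 z p ltr01 z0 (andb_true_intro (conj p0 p1)).
rewrite ln1 mulr0 add0r mulr1 in h.
have y0 : 0 < (1 - p) + p * z by nra.
apply: (le_trans (y := expR (ln ((1 - p) + p * z)))).
  by rewrite ler_expR.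
by rewrite lnK //; lra.
Qed.

Lemma pow_ge (R : realType) (z p : R) : 0 < z -> p <= 0 -> 1 + p * (z - 1) <= powR z p.
Proof.
move=> z0 p0; rewrite /powR gt_eqF //.
apply: le_trans (expR_ge1Dx _); rewrite lerD2l.
apply: ler_wnM2l => //.
have := @le_ln1Dx R (z - 1); rewrite [1 + _]addrC subrK; apply; lra.
Qed.

Lemma pow_tan_le (R : realType) (y m p : R) : 0 < y -> 0 < m -> 0 <= p <= 1 ->
  powR y p <= powR m p + (p * powR m p) * (y / m - 1).
Proof.
move=> y0 m0 hp; have ym : 0 < y / m by rewrite divr_gt0.
have -> : powR y p = powR m p * powR (y / m) p.
  by rewrite -powRM ?ltW // mulrC divfK // lt0r_neq0.
have h := pow_le ym hp.
have pm0 : 0 <= powR m p by apply: powR_ge0.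
apply: le_trans (ler_wpM2l pm0 h) _; apply: eqle; ring.
Qed.

Lemma pow_tan_ge (R : realType) (y m p : R) : 0 < y -> 0 < m -> p <= 0 ->
  powR m p + (p * powR m p) * (y / m - 1) <= powR y p.
Proof.
move=> y0 m0 hp; have ym : 0 < y / m by rewrite divr_gt0.
have -> : powR y p = powR m p * powR (y / m) p.
  by rewrite -powRM ?ltW // mulrC divfK // lt0r_neq0.
have h := pow_ge ym hp.
have pm0 : 0 <= powR m p by apply: powR_ge0.
apply: le_trans (ler_wpM2l pm0 h); apply: eqle; ring.
Qed.

Definition cvx2 (R : realType) (psi : R -> R) := forall a b t, 0 < a -> 0 < b -> 0 <= t <= 1 ->
  psi ((1 - t) * a + t * b) <= (1 - t) * psi a + t * psi b.

Lemma cvx2_nln (R : realType) : cvx2 (fun s : R => - ln s).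
Proof. move=> a b t a0 b0 ht /=; have := ln_chord2 a0 b0 ht; lra. Qed.

Lemma cvx2_pow (R : realType) (al : R) : 0 < al -> al <= 2 -> al != 1 ->
  cvx2 (fun s : R => (1 - al)^-1 * powR s (al - 1)).
Proof.
move=> a0 a2 a1 a b t pa pb ht /=; have m0 := mid_gt0 pa pb ht.
have [alt|agt] := ltP al 1.
  have k0 : 0 <= (1 - al)^-1 by rewrite invr_ge0 subr_ge0 ltW.
  have p0 : al - 1 <= 0 by rewrite subr_le0 ltW.
  have h := @tan_concave R (fun s => - powR s (al - 1)) a b t
     (- ((al - 1) * powR ((1 - t) * a + t * b) (al - 1))) pa pb ht.
  have /h /= {}h : forall y, 0 < y -> - powR y (al - 1) <= - powR ((1 - t) * a + t * b) (al - 1) +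
     - ((al - 1) * powR ((1 - t) * a + t * b) (al - 1)) * (y / ((1 - t) * a + t * b) - 1).
    move=> y y0; have := pow_tan_ge y0 m0 p0; lra.
  have h2 : powR ((1 - t) * a + t * b) (al - 1) <= (1 - t) * powR a (al - 1) + t * powR b (al - 1) by lra.
  apply: le_trans (ler_wpM2l k0 h2) _; apply: eqle; ring.
have agt' : 1 < al by rewrite lt_neqAle eq_sym a1 agt.
have k0 : (1 - al)^-1 <= 0 by rewrite invr_le0 subr_le0 ltW.
have p0 : 0 <= al - 1 <= 1 by apply/andP; split; lra.
have h := @tan_concave R (fun s => powR s (al - 1)) a b t
     ((al - 1) * powR ((1 - t) * a + t * b) (al - 1)) pa pb ht.
have /h /= {}h : forall y, 0 < y -> powR y (al - 1) <= powR ((1 - t) * a + t * b) (al - 1) +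
     ((al - 1) * powR ((1 - t) * a + t * b) (al - 1)) * (y / ((1 - t) * a + t * b) - 1).
  by move=> y y0; apply: pow_tan_le.
apply: le_trans (ler_wnM2l k0 h) _; apply: eqle; ring.
Qed.

Lemma pos1 (R : realType) (s : R) : 0 <= s -> 0 < 1 + s.
Proof. move=> h; lra. Qed.

Lemma chord_comp (R : realType) (psi g : R -> R) : cvx2 psi -> aff g -> 0 < g 0 -> 0 < g 1 ->
  chord (fun t => psi (g t)).
Proof. by move=> hp hg g0 g1 t ht; rewrite hg; apply: hp. Qed.

Definition Hcol (R : realType) (U B : finType) (r : U -> B -> R) (al : R) (b : B) (col : U -> R) : R :=
  if al == 0 then \big[Num.max/0]_(u : U) (r u b * col u)
  else if al == 1 then
    \sum_(u : U) col u * (ln (r u b) - ln (1 + \sum_(v : U | v != u) col v))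
  else \sum_(u : U) ((1 - al)^-1 * (powR (r u b) (1 - al) * col u *
        powR (1 + \sum_(v : U | v != u) powR (r v b / r u b) ((1 - al) / al) * col v) (al - 1))).

Lemma F_col (R : realType) (U B : finType) (r : U -> B -> R) (al : R) (w : U -> B -> R) :
  Falpha r al w = \sum_(b : B) Hcol r al b (fun u => w u b).
Proof.
rewrite /Falpha /Hcol; case: ifP => // _; case: ifP => _; first exact: exchange_big.
rewrite mulr_sumr; under eq_bigr do rewrite mulr_sumr; exact: exchange_big.
Qed.

Lemma aff_col (R : realType) (U : finType) (u v : U) (c : R) :
  aff (fun t => if v == u then t else c).
Proof. case: (v == u); [exact: aff_id | exact: aff_const]. Qed.

Lemma col_ge0 (R : realType) (U : finType) (u v : U) (c t : R) : 0 <= c -> 0 <= t ->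
  0 <= (if v == u then t else c).
Proof. by case: (v == u). Qed.

Lemma Hcol_chord (R : realType) (U B : finType) (r : U -> B -> R) (al : R) (b : B)
  (x : U -> B -> R) (u : U) :
  (forall u b, 0 < r u b) -> 0 <= al -> al <= 2 -> (forall v, 0 <= x v b) ->
  chord (fun t => Hcol r al b (fun v => if v == u then t else x v b)).
Proof.
move=> Hr a0 a2 Hx; unfold Hcol.
case E0: (al == 0); rewrite ?E0.
  apply: chord_bigmax => v; apply: aff_chord; apply: aff_scale; exact: aff_col.
have an0 : al != 0 by rewrite E0.
have apos : 0 < al by rewrite lt_neqAle eq_sym an0.
case E1: (al == 1); rewrite ?E1.
  apply: chord_sum => v; case: (eqVneq v u) => [->|vu].
    set K := ln (r u b) - ln (1 + \sum_(v' | v' != u) x v' b).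
    apply: (chord_ext (f := fun t => K * t)).
      move=> t /=; rewrite mulrC /K; congr (_ * (_ - ln (1 + _))).
      by apply: eq_bigr => v' /negbTE ->.
    exact/aff_chord/aff_scale/aff_id.
  apply: (chord_ext (f := fun t => x v b * ln (r v b) + x v b *
     (fun s => - ln s) (1 + \sum_(v' | v' != v) (if v' == u then t else x v' b)))).
    by move=> t /=; ring.
  apply: chord_add; first exact: chord_const.
  apply: chord_scale => //; apply: (@chord_comp _ (fun s => - ln s)); first exact: cvx2_nln.
  - apply: aff_add; first exact: aff_const.
    apply: aff_sum => v'; exact: aff_col.
  - rewrite /=; apply: pos1; apply: sumr_ge0 => v' _; by apply: col_ge0.
  - rewrite /=; apply: pos1; apply: sumr_ge0 => v' _; by apply: col_ge0.
apply: chord_sum => v; case: (eqVneq v u) => [->|vu].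
  set K := (1 - al)^-1 * (powR (r u b) (1 - al) *
     powR (1 + \sum_(v' | v' != u) powR (r v' b / r u b) ((1 - al) / al) * x v' b) (al - 1)).
  apply: (chord_ext (f := fun t => K * t)).
    move=> t /=; rewrite /K.
    have -> : \sum_(v' | v' != u) powR (r v' b / r u b) ((1 - al) / al) * (if v' == u then t else x v' b)
       = \sum_(v' | v' != u) powR (r v' b / r u b) ((1 - al) / al) * x v' b.
      by apply: eq_bigr => v' /negbTE ->.
    ring.
  exact/aff_chord/aff_scale/aff_id.
apply: (chord_ext (f := fun t => (powR (r v b) (1 - al) * x v b) *
   (fun s => (1 - al)^-1 * powR s (al - 1))
     (1 + \sum_(v' | v' != v) powR (r v' b / r v b) ((1 - al) / al) * (if v' == u then t else x v' b)))).
  by move=> t /=; ring.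
apply: chord_scale; first by rewrite mulr_ge0 ?powR_ge0.
apply: (@chord_comp _ (fun s => (1 - al)^-1 * powR s (al - 1))); first by apply: cvx2_pow => //; rewrite E1.
- apply: aff_add; first exact: aff_const.
  apply: aff_sum => v'; apply: aff_scale; exact: aff_col.
- rewrite /=; apply: pos1; apply: sumr_ge0 => v' _; by rewrite mulr_ge0 ?powR_ge0 // col_ge0.
- rewrite /=; apply: pos1; apply: sumr_ge0 => v' _; by rewrite mulr_ge0 ?powR_ge0 // col_ge0.
Qed.
Lemma finmax (R : realDomainType) (I : finType) (i0 : I) (F : I -> R) : exists i, forall j, F j <= F i.
Proof.
case: (@arg_maxP _ _ _ i0 xpredT F isT) => i _ H; exists i => j; exact: H.
Qed.

Lemma row_step (R : realType) (B : finType) (Phi : B -> R -> R) (y : B -> R) :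
  (forall b, chord (Phi b)) -> (forall b, 0 <= y b) -> \sum_(b : B) y b = 1 ->
  exists b0, \sum_(b : B) Phi b (y b) <= \sum_(b : B) Phi b ((b0 == b)%:R).
Proof.
move=> hc y0 ys.
case: (pickP (fun _ : B => true)) => [b1 _|H]; last first.
  by move: ys; rewrite big1 => [/eqP|b _]; [rewrite eq_sym oner_eq0 | have := H b].
have [b0 Hb0] := finmax b1 (fun b => Phi b 1 - Phi b 0).
exists b0.
have yl1 b : y b <= 1.
  move: ys; rewrite (bigD1 b) //= => ys.
  have : 0 <= \sum_(i | i != b) y i by apply: sumr_ge0.
  lra.
apply: (le_trans (y := \sum_b ((1 - y b) * Phi b 0 + y b * Phi b 1))).
  by apply: ler_sum => b _; apply: hc; rewrite y0 yl1.
have E1 : \sum_b ((1 - y b) * Phi b 0 + y b * Phi b 1) =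
   \sum_b Phi b 0 + \sum_b (y b * (Phi b 1 - Phi b 0)).
  by rewrite -big_split /=; apply: eq_bigr => b _; ring.
have E2 : \sum_(b : B) Phi b ((b0 == b)%:R) = \sum_b Phi b 0 + (Phi b0 1 - Phi b0 0).
  rewrite (bigD1 b0) //= [X in _ = X + _](bigD1 b0) //= eqxx.
  have -> : \sum_(i | i != b0) Phi i ((b0 == i)%:R) = \sum_(i | i != b0) Phi i 0.
    by apply: eq_bigr => i; rewrite eq_sym => /negbTE ->.
  ring.
rewrite E1 E2 lerD2l.
apply: (le_trans (y := \sum_b (y b * (Phi b0 1 - Phi b0 0)))).
  by apply: ler_sum => b _; apply: ler_wpM2l.
by rewrite -mulr_suml ys mul1r.
Qed.

Definition upd (R : realType) (U B : finType) (x : U -> B -> R) (u : U) (y : B -> R) : U -> B -> R :=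
  fun v b => if v == u then y b else x v b.

Lemma sum_ind (R : realType) (B : finType) (b0 : B) : \sum_(b : B) ((b0 == b)%:R : R) = 1.
Proof.
rewrite (bigD1 b0) //= eqxx big1 ?addr0 // => b; rewrite eq_sym => /negbTE -> //.
Qed.

Lemma step_user (R : realType) (U B : finType) (r : U -> B -> R) (al : R) (x : U -> B -> R) (u : U) :
  (forall u b, 0 < r u b) -> 0 <= al -> al <= 2 -> relaxX x ->
  exists b0, Falpha r al x <= Falpha r al (upd x u (fun b => (b0 == b)%:R)) /\
             relaxX (upd x u (fun b => (b0 == b)%:R)).
Proof.
move=> Hr a0 a2 [x0 xs].
have [b0 Hb] := @row_step R B (fun b t => Hcol r al b (fun v => if v == u then t else x v b)) (x u)
   (fun b => @Hcol_chord R U B r al b x u Hr a0 a2 (fun v => x0 v b)) (x0 u) (xs u).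
exists b0; split.
  rewrite !F_col; apply: le_trans Hb; apply: eqle; apply: eq_bigr => b _.
  by congr Hcol; apply/funext => v; case: eqP => // ->.
split.
  by move=> v b; rewrite /upd; case: (v == u) => //; apply: ler0n.
move=> v; rewrite /upd; case: (v == u) => //; exact: sum_ind.
Qed.

Lemma rounding (R : realType) (U B : finType) (r : U -> B -> R) (al : R) (s : seq U) :
  (forall u b, 0 < r u b) -> 0 <= al -> al <= 2 ->
  forall x, relaxX x -> exists x', relaxX x' /\ Falpha r al x <= Falpha r al x' /\
    forall u, u \in s -> exists b, forall b', x' u b' = (b == b')%:R.
Proof.
move=> Hr a0 a2; elim: s => [|u s IH] x hx.
  by exists x; split => //; split => //.
have [x1 [hx1 [F1 H1]]] := IH x hx.
have [b0 [F2 hx2]] := step_user u Hr a0 a2 hx1.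
exists (upd x1 u (fun b => (b0 == b)%:R)); split => //; split; first exact: le_trans F2.
move=> v; rewrite inE /upd; case: eqP => [-> _|_ /= vs]; first by exists b0.
exact: H1.
Qed.

Definition ind (R : realType) (U B : finType) (s : {ffun U -> B}) : U -> B -> R :=
  fun u b => ((s u == b)%:R : R).

Lemma round_all (R : realType) (U B : finType) (r : U -> B -> R) (al : R) :
  (forall u b, 0 < r u b) -> 0 <= al -> al <= 2 ->
  forall x, relaxX x -> exists s : {ffun U -> B}, Falpha r al x <= Falpha r al (ind R s).
Proof.
move=> Hr a0 a2 x hx.
have [x' [_ [F1 H1]]] := rounding (enum U) Hr a0 a2 hx.
have H2 : forall u, exists b, forall b', x' u b' = (b == b')%:R.
  by move=> u; apply: H1; rewrite mem_enum.
have [f Hf] := choice H2.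
exists [ffun u => f u]; apply: (le_trans F1); apply: eqle; congr Falpha.
by apply/funext => u; apply/funext => b; rewrite /ind ffunE Hf.
Qed.

Theorem theorem1 (R : realType) (U B : finType)
  (HU : (0 < #|U|)%N) (HB : (0 < #|B|)%N)
  (r : U -> B -> R) (Hr : forall u b, 0 < r u b)
  (alpha : R) (Ha0 : 0 <= alpha) (Ha2 : alpha <= 2) :
  exists m : R,
    is_max [set Falpha r alpha z | z in @integZ R U B] m /\
    is_max [set Falpha r alpha x | x in @relaxX R U B] m.
Proof.
have [b1 _] := card_gt0P HB.
have [s0 Hs0] := finmax [ffun _ : U => b1] (fun s => Falpha r alpha (ind R s)).
have indZ : forall s : {ffun U -> B}, @integZ R U B (ind R s).
  by move=> s; split => [u b|u]; [apply: natr_nat | exact: sum_ind].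
have ZX : forall z : U -> B -> R, integZ z -> relaxX z.
  by move=> z [z0 zs]; split => // u b; exact: natr_ge0 (z0 u b).
have bound : forall x : U -> B -> R, relaxX x -> Falpha r alpha x <= Falpha r alpha (ind R s0).
  move=> x hx; have [s Hs] := round_all Hr Ha0 Ha2 hx; exact: le_trans Hs (Hs0 s).
exists (Falpha r alpha (ind R s0)); split; split.
- by exists (ind R s0).
- by move=> y [z hz <-]; apply: bound; apply: ZX.
- by exists (ind R s0) => //; apply: ZX.
- by move=> y [z hz <-]; apply: bound.
Qed.
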